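(* Let $W=\langle s_0,\dots,s_{n-1}\rangle$ be a finite string C-group, $\mathcal{P}(W)$ the regular polytope with automorphism group $W$, and $N\le W$ such that $\mathcal{P}(W)/N$ is a polytope admitting the flag action of $W$, with $N$ the stabilizer of the base flag $\Phi$. Let $u_1=1,u_2,\dots,u_r\in W$ be chosen so that the flags $\Phi^{u_1},\dots,\Phi^{u_r}$ are representatives of the $r$ orbits of the automorphism group of $\mathcal{P}(W)/N$ on its flags. Let $\sigma_1,\dots,\sigma_t$ be the distinct Coxeter elements of $W$, and let $m_{j,l}=|\{\Phi^{u_j}\alpha : \alpha\in\langle\sigma_l\rangle\}|$, the size of the orbit of $\Phi^{u_j}$ under the flag action of $\langle\sigma_l\rangle$. For $0\le i\le n-1$ let $H_i=\langle s_k : k\ne i\rangle$. If $(\sigma_l)^kH_i\cap N^{u_j}=\emptyset$ for all $i$, $j$, $l$ and all $1\le k<m_{j,l}$, then $\mathcal{P}(W)/N$ has acoptic Petrie schemes.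
   Context: Abstract polytopes are graded posets with least and greatest faces, all flags of equal length, strongly connected, satisfying the diamond condition. A string C-group is generated by distinct involutions $s_0,\dots,s_{n-1}$ with $(s_is_j)^2=1$ for $|i-j|>1$ and the intersection property. The flag action of $W$ on a polytope sends a flag $\Phi$ under $s_i$ to the unique flag $\Phi^{s_i}$ differing from $\Phi$ only in its face of rank $i$ (assumed to extend to a well-defined right action). A Coxeter element of $W$ is a product of the generators $s_0,\dots,s_{n-1}$ in which each generator appears exactly once (in some order). The exchange map $\varrho_i$ sends each flag to the flag differing from it only in rank $i$; a Petrie map $\sigma$ is a composition of $\varrho_0,\dots,\varrho_{n-1}$ with each appearing exactly once (e.g. the flag action of a Coxeter element). A Petrie sequence is a sequence of flags $(\dots,\Phi\sigma^{-1},\Phi,\Phi\sigma,\Phi\sigma^2,\dots)$ for a fixed Petrie map $\sigma$ and flag $\Phi$; its Petrie scheme is its shortest cyclic listing if the sequence is periodic, and the sequence itself otherwise. A polytope has acoptic Petrie schemes if each proper face (face other than the least and greatest) appears at most once in each Petrie scheme, i.e. among the flags of a Petrie scheme no proper face occurs in two different positions. $N^{u}=u^{-1}Nu$. *)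

(* Defs.v *)
From HB Require Import structures.
From mathcomp Require Import all_boot all_fingroup.

Set Implicit Arguments.
Unset Strict Implicit.
Unset Printing Implicit Defensive.

Local Open Scope group_scope.

Definition string_C_group (gT : finGroupType) (W : {group gT}) (n : nat)
    (s : 'I_n -> gT) : Prop :=
  [/\ W :=: <<[set s i | i : 'I_n]>>,
      injective s,
      (forall i, s i != 1 /\ s i ^+ 2 = 1),
      (forall i j : 'I_n, ((i.+1 < j) || (j.+1 < i))%N -> (s i * s j) ^+ 2 = 1)
    & (forall I J : {set 'I_n},
         <<[set s i | i in I]>> :&: <<[set s i | i in J]>>
         = <<[set s i | i in I :&: J]>>)].

Definition Hgen (gT : finGroupType) (n : nat) (s : 'I_n -> gT) (i : nat)
  : {set gT} := <<[set s k | k : 'I_n & val k != i]>>.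

Definition coxeter (gT : finGroupType) (n : nat) (s : 'I_n -> gT) (c : gT)
  : Prop := exists p : {perm 'I_n}, c = \prod_(k < n) s (p k).

(* D = the faces, le = the partial order, rk = rank shifted by one    *)
(* (least face has rk 0, greatest face has rk n.+1 for an n-polytope). *)

Section AbstractPolytope.
Local Close Scope group_scope.
Variables (F : finType) (D : pred F) (le : rel F) (rk : F -> nat).

Definition is_chain (Psi : {set F}) : bool :=
  [forall x in Psi, forall y in Psi, le x y || le y x].

Definition is_flag (Psi : {set F}) : bool :=
  [&& [forall x in Psi, D x], is_chain Psi &
      [forall x, (D x && [forall y in Psi, le x y || le y x]) ==> (x \in Psi)]].

Definition comparable_rel : rel F := fun x y => le x y || le y x.

Definition is_polytope (n : nat) : Prop :=
  (forall x, D x -> le x x) /\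
  (forall x y, D x -> D y -> le x y -> le y x -> x = y) /\
  (forall x y z, D x -> D y -> D z -> le x y -> le y z -> le x z) /\
  (exists2 x, D x & forall y, D y -> le x y) /\
  (exists2 y, D y & forall x, D x -> le x y) /\
  (forall x, D x -> (rk x <= n.+1)%N) /\
  (forall x y, D x -> D y -> le x y -> x != y -> (rk x < rk y)%N) /\
  (forall Psi, is_flag Psi -> forall r, (r <= n.+1)%N ->
      #|[set x in Psi | rk x == r]| = 1%N) /\
  (forall x y, D x -> D y -> le x y -> (rk x + 3 <= rk y)%N ->
     forall a b,
       [&& D a, le x a, le a y, a != x & a != y] ->
       [&& D b, le x b, le b y, b != x & b != y] ->
       exists p : seq F,
         [/\ path comparable_rel a p, last a p = b &
             all (fun z => [&& D z, le x z, le z y, z != x & z != y]) p]) /\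
  (forall x y, D x -> D y -> le x y -> rk y = (rk x).+2 ->
     #|[set z | [&& D z, le x z, le z y, z != x & z != y]]| = 2%N).

(* the exchange map rho_i (i is the paper's rank, i.e. rk = i.+1):
   the flag differing from Psi only in its face of rank i *)
Definition exch (i : nat) (Psi : {set F}) : {set F} :=
  odflt Psi [pick Psi' : {set F} | [&& is_flag Psi', Psi' != Psi &
       [forall x, (rk x != i.+1) ==> ((x \in Psi') == (x \in Psi))]]].

Definition petrie (n : nat) (p : {perm 'I_n}) (Psi : {set F}) : {set F} :=
  foldl (fun Phi k => exch (val (p k)) Phi) Psi (enum 'I_n).

(* acoptic Petrie schemes: no proper face occurs at two different
   positions k < k' of the (shortest cyclic listing of the) Petrie sequence;
   positions k < k' lie in the shortest cyclic listing iff k' is smaller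
   than the period, i.e. no 0 < m <= k' has sigma^m Psi = Psi. *)
Definition acoptic (n : nat) : Prop :=
  forall Psi, is_flag Psi -> forall p : {perm 'I_n}, forall k k',
    (k < k')%N ->
    (forall m, (0 < m <= k')%N -> iter m (petrie p) Psi != Psi) ->
    forall x, D x -> (0 < rk x <= n)%N ->
      x \in iter k (petrie p) Psi -> x \in iter k' (petrie p) Psi -> False.

Definition is_aut (f : F -> F) : Prop :=
  [/\ {in D &, injective f},
      (forall x, D x -> D (f x)),
      (forall y, D y -> exists2 x, D x & f x = y)
    & (forall x y, D x -> D y -> le (f x) (f y) = le x y)].

Definition same_aut_orbit (Psi Psi' : {set F}) : Prop :=
  exists2 f, is_aut f & f @: Psi = Psi'.

End AbstractPolytope.

(* The quotient P(W)/N in the coset model: faces of rank i (0<=i<n)   *)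
(* are the double cosets N w H_i (w in W); the least and greatest     *)
(* faces correspond to H_{-1} = H_n = W.  A face is encoded as the    *)
(* pair (i+1, N w H_i), with (0, W) and (n+1, W) the improper faces.  *)

Definition qface (gT : finGroupType) (n : nat) := ('I_n.+2 * {set gT})%type.

Section Quotient.
Variables (gT : finGroupType) (n : nat) (W N : {group gT}) (s : 'I_n -> gT).

Definition Hr (r : 'I_n.+2) : {set gT} :=
  if (0 < r <= n)%N then Hgen s r.-1 else W.

Definition faceset (r : 'I_n.+2) (w : gT) : {set gT} := (N :* w) * Hr r.

Definition qD : pred (qface gT n) :=
  fun f => [exists w in W, f.2 == faceset f.1 w].

Definition qle : rel (qface gT n) :=
  fun f g => (f.1 <= g.1)%N &&
    [exists w in W, (f.2 == faceset f.1 w) && (g.2 == faceset g.1 w)].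

Definition qrk (f : qface gT n) : nat := val f.1.

Definition base_flag : {set qface gT n} :=
  [set f : qface gT n | f.2 == faceset f.1 1].

Definition flag_action (act : {set qface gT n} -> gT -> {set qface gT n})
  : Prop :=
  [/\ (forall Psi w, is_flag qD qle Psi -> w \in W -> is_flag qD qle (act Psi w)),
      (forall Psi, is_flag qD qle Psi -> act Psi 1 = Psi),
      (forall Psi v w, is_flag qD qle Psi -> v \in W -> w \in W ->
          act Psi (v * w) = act (act Psi v) w)
    & (forall Psi (i : 'I_n), is_flag qD qle Psi ->
          act Psi (s i) = exch qD qle qrk i Psi)].

End Quotient.

(* Main.v *)
Require Import Defs.
From HB Require Import structures.
From mathcomp Require Import all_boot all_fingroup.
Local Open Scope group_scope.
Set Implicit Arguments. Unset Strict Implicit. Unset Printing Implicit Defensive.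
Local Close Scope group_scope.

Section Poly.
Variables (F : finType) (D : pred F) (le : rel F) (rk : F -> nat) (n : nat).
Hypothesis HP : is_polytope D le rk n.

Lemma P_refl x : D x -> le x x.
Proof. by move: HP; rewrite /is_polytope => - [H _]; apply: H. Qed.
Lemma P_anti x y : D x -> D y -> le x y -> le y x -> x = y.
Proof. by move: HP; rewrite /is_polytope => - [_ [H _]]; apply: H. Qed.
Lemma P_trans x y z : D x -> D y -> D z -> le x y -> le y z -> le x z.
Proof. by move: HP; rewrite /is_polytope => - [_ [_ [H _]]]; apply: H. Qed.
Lemma P_bnd x : D x -> rk x <= n.+1.
Proof. by move: HP; rewrite /is_polytope => - [_ [_ [_ [_ [_ [H _]]]]]]; apply: H. Qed.
Lemma P_lt x y : D x -> D y -> le x y -> x != y -> rk x < rk y.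
Proof. by move: HP; rewrite /is_polytope => - [_ [_ [_ [_ [_ [_ [H _]]]]]]]; apply: H. Qed.
Lemma P_card Psi : is_flag D le Psi -> forall r, r <= n.+1 ->
  #|[set x in Psi | rk x == r]| = 1.
Proof. by move: HP; rewrite /is_polytope => - [_ [_ [_ [_ [_ [_ [_ [H _]]]]]]]]; apply: H. Qed.
Lemma P_diam x y : D x -> D y -> le x y -> rk y = (rk x).+2 ->
  #|[set z | [&& D z, le x z, le z y, z != x & z != y]]| = 2.
Proof. by move: HP; rewrite /is_polytope => - [_ [_ [_ [_ [_ [_ [_ [_ [_ H]]]]]]]]]; apply: H. Qed.

Lemma flagD Psi x : is_flag D le Psi -> x \in Psi -> D x.
Proof. by case/and3P => /forall_inP H _ _ /H. Qed.
Lemma flag_cmp Psi x y : is_flag D le Psi -> x \in Psi -> y \in Psi ->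
  le x y || le y x.
Proof.
case/and3P => _ /forall_inP H _ hx hy.
by have /forall_inP := H x hx; apply.
Qed.
Lemma flag_max Psi x : is_flag D le Psi -> D x ->
  (forall y, y \in Psi -> le x y || le y x) -> x \in Psi.
Proof.
case/and3P => _ _ /forallP H Dx Hc; move: (H x); rewrite Dx /=.
by move/implyP; apply; apply/forall_inP.
Qed.

Lemma cmp_le x y : D x -> D y -> le x y || le y x -> rk x <= rk y -> le x y.
Proof.
move=> Dx Dy /orP[//|Hyx] Hr.
case: (eqVneq y x) => [->|ne]; first exact: P_refl.
by have := P_lt Dy Dx Hyx ne; rewrite ltnNge Hr.
Qed.

Lemma same_rank x y : D x -> D y -> le x y || le y x -> rk x = rk y -> x = y.
Proof.
move=> Dx Dy c e; apply: P_anti => //.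
  by apply: cmp_le => //; rewrite e.
by apply: cmp_le => //; [rewrite orbC|rewrite e].
Qed.

Lemma flag_uniq Psi x y : is_flag D le Psi -> x \in Psi -> y \in Psi ->
  rk x = rk y -> x = y.
Proof.
move=> fP hx hy e; apply: same_rank e; [exact: flagD fP hx|exact: flagD fP hy|].
exact: flag_cmp fP hx hy.
Qed.

Lemma flag_ex Psi r : is_flag D le Psi -> r <= n.+1 ->
  exists2 x, x \in Psi & rk x = r.
Proof.
move=> fP hr; have := P_card fP hr => H.
have : 0 < #|[set x in Psi | rk x == r]| by rewrite H.
by case/card_gt0P => x; rewrite inE => /andP[hx /eqP]; exists x.
Qed.

Definition betw y y' := [set z | [&& D z, le y z, le z y', z != y & z != y']].

Lemma in_betw Psi y z y' i : is_flag D le Psi -> y \in Psi -> z \in Psi ->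
  y' \in Psi -> rk y = i -> rk z = i.+1 -> rk y' = i.+2 -> z \in betw y y'.
Proof.
move=> fP hy hz hy' ry rz ry'.
have Dy := flagD fP hy; have Dz := flagD fP hz; have Dy' := flagD fP hy'.
rewrite inE; apply/and5P; split => //.
- by apply: cmp_le => //; [apply: (flag_cmp fP)|rewrite ry rz].
- by apply: cmp_le => //; [apply: (flag_cmp fP)|rewrite ry' rz].
- by apply/eqP => e; move: rz; rewrite e ry => /n_Sn.
- by apply/eqP => e; move: ry'; rewrite -e rz => /n_Sn.
Qed.

Lemma betw_card Psi y y' i : is_flag D le Psi -> y \in Psi -> y' \in Psi ->
  rk y = i -> rk y' = i.+2 -> #|betw y y'| = 2.
Proof.
move=> fP hy hy' ry ry'.
have Dy := flagD fP hy; have Dy' := flagD fP hy'.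
apply: P_diam => //; last by rewrite ry ry'.
apply: cmp_le => //; first by apply: (flag_cmp fP).
by rewrite ry ry'; apply/leqW/leqW.
Qed.

Lemma two_of_three (S : {set F}) a b c : #|S| = 2 -> a \in S -> b \in S ->
  c \in S -> a != b -> a != c -> b = c.
Proof.
case/eqP/cards2P => [p [q [npq ->]]]; rewrite !inE.
by case/orP=>/eqP->; case/orP=>/eqP->; case/orP=>/eqP->; rewrite ?eqxx // eq_sym.
Qed.

Definition agree r (P1 P2 : {set F}) := forall x, rk x != r -> (x \in P1) = (x \in P2).

Lemma flag_ext P1 P2 r b : is_flag D le P1 -> is_flag D le P2 -> agree r P1 P2 ->
  b \in P1 -> b \in P2 -> rk b = r -> P1 = P2.
Proof.
move=> f1 f2 ag h1 h2 rb; apply/setP => x.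
case: (eqVneq (rk x) r) => [e|ne]; last exact: ag.
apply/idP/idP => hx.
  by rewrite (flag_uniq f1 hx h1) // rb.
by rewrite (flag_uniq f2 hx h2) // rb.
Qed.

Lemma exch_ex i Psi : i < n -> is_flag D le Psi ->
  exists Psi' : {set F}, [&& is_flag D le Psi', Psi' != Psi &
       [forall x, (rk x != i.+1) ==> ((x \in Psi') == (x \in Psi))]].
Proof.
move=> lin fP.
have [y hy ry] := flag_ex fP (leqW (ltnW lin)).
have [a ha ra] := flag_ex (r:=i.+1) fP (ltnW lin).
have [y' hy' ry'] := flag_ex (r:=i.+2) fP lin.
have Dy := flagD fP hy; have Dy' := flagD fP hy'; have Da := flagD fP ha.
have cS := betw_card fP hy hy' ry ry'.
have aS := in_betw fP hy ha hy' ry ra ry'.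
have [b bS nba] : exists2 b, b \in betw y y' & b != a.
  case/eqP/cards2P: cS => [p [q [npq eS]]].
  move: aS; rewrite eS !inE => /orP[]/eqP->.
    by exists q; rewrite ?inE ?eqxx ?orbT // eq_sym.
  by exists p; rewrite ?inE ?eqxx.
move: (bS); rewrite inE => /and5P[Db lyb lby' nby nby'].
have rb : rk b = i.+1.
  have h1 : i < rk b by rewrite -ry; apply: P_lt => //; rewrite eq_sym.
  have := P_lt Db Dy' lby' nby'; rewrite ry' ltnS => h2.
  by apply/eqP; rewrite eqn_leq h1 h2.
have nya : y != a by apply/eqP => e; move: ra; rewrite -e ry => /n_Sn.
have ny'a : y' != a by apply/eqP => e; move: ra; rewrite -e ry' => /esym/n_Sn.
have cmpb z : z \in Psi -> z != a -> le z b || le b z.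
  move=> hz nza; have Dz := flagD fP hz.
  case: (ltngtP (rk z) i.+1) => [lt|gt|eq].
  - apply/orP; left; apply: (P_trans Dz Dy Db _ lyb).
    apply: (cmp_le Dz Dy); first exact: (flag_cmp fP hz hy).
    by rewrite ry -ltnS.
  - apply/orP; right; apply: (P_trans Db Dy' Dz lby' _).
    apply: (cmp_le Dy' Dz); first exact: (flag_cmp fP hy' hz).
    by rewrite ry'.
  - by move: nza; rewrite (flag_uniq fP hz ha) ?eqxx // ra.
exists (b |: (Psi :\ a)).
have bnP : b \notin Psi.
  by apply/negP => hb; move: nba; rewrite (flag_uniq fP hb ha) ?eqxx // ra.
apply/and3P; split.
- apply/and3P; split.
  + apply/forall_inP => z; rewrite !inE => /orP[/eqP->//|/andP[_ hz]].
    exact: flagD fP hz.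
  + apply/forall_inP => z; rewrite !inE => hz; apply/forall_inP => w; rewrite !inE.
    case/orP: hz => [/eqP->|/andP[nz hz]]; case/orP => [/eqP->|/andP[nw hw]].
    * by rewrite P_refl.
    * by rewrite orbC cmpb.
    * exact: cmpb.
    * by apply: (flag_cmp fP).
  + apply/forallP => x; apply/implyP => /andP[Dx /forall_inP Hc].
    rewrite !inE; case: (eqVneq x b) => //= nxb.
    have cyx : le x y || le y x by apply: Hc; rewrite !inE nya hy orbT.
    have cy'x : le x y' || le y' x by apply: Hc; rewrite !inE ny'a hy' orbT.
    have cbx : le x b || le b x by apply: Hc; rewrite !inE eqxx.
    have nxa : x != a.
      apply/eqP => e; subst x; move: nba; rewrite (same_rank Db Da) ?eqxx //.
        by rewrite orbC.
      by rewrite ra.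
    rewrite nxa /=; apply: (flag_max fP Dx) => z hz.
    case: (eqVneq z a) => [->|nza]; last by apply: Hc; rewrite !inE nza hz orbT.
    case: (ltngtP (rk x) i.+1) => [lt|gt|eq].
    - apply/orP; left; apply: (P_trans Dx Dy Da).
        by apply: (cmp_le Dx Dy cyx); rewrite ry -ltnS.
      by apply: (cmp_le Dy Da (flag_cmp fP hy ha)); rewrite ry ra.
    - apply/orP; right; apply: (P_trans Da Dy' Dx).
        by apply: (cmp_le Da Dy' (flag_cmp fP ha hy')); rewrite ry' ra.
      by apply: (cmp_le Dy' Dx); [rewrite orbC|rewrite ry'].
    - exfalso.
      have xS : x \in betw y y'.
        rewrite inE; apply/and5P; split => //.
        + by apply: (cmp_le Dy Dx); [rewrite orbC|rewrite ry eq].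
        + by apply: (cmp_le Dx Dy' cy'x); rewrite ry' eq.
        + by apply/eqP => e'; move: eq; rewrite e' ry => /n_Sn.
        + by apply/eqP => e'; move: eq; rewrite e' ry' => /esym/n_Sn.
      have nbx : b != x by rewrite eq_sym.
      by move: nxa; rewrite -(two_of_three cS bS aS xS nba nbx) eqxx.
- by apply/eqP => e; move: bnP; rewrite -e !inE eqxx.
- apply/forallP => x; apply/implyP => nx; rewrite !inE.
  case: (eqVneq x b) => [e|_]; first by move: nx; rewrite e rb eqxx.
  case: (eqVneq x a) => [e|_] //=; by move: nx; rewrite e ra eqxx.
Qed.

Lemma exch_spec i Psi : i < n -> is_flag D le Psi ->
  [/\ is_flag D le (exch D le rk i Psi), exch D le rk i Psi != Psi &
      agree i.+1 (exch D le rk i Psi) Psi].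
Proof.
move=> lin fP; rewrite /exch; case: pickP => [E /and3P[fE nE /forallP H]|H].
  by split => // x nx; move: (H x); rewrite nx => /eqP.
by exfalso; have [E hE] := exch_ex lin fP; move: (H E); rewrite hE.
Qed.

Lemma exch_uniq i Psi P1 P2 : i < n -> is_flag D le Psi ->
  is_flag D le P1 -> is_flag D le P2 -> P1 != Psi -> P2 != Psi ->
  agree i.+1 P1 Psi -> agree i.+1 P2 Psi -> P1 = P2.
Proof.
move=> lin fP f1 f2 n1 n2 a1 a2.
have [y hy ry] := flag_ex fP (leqW (ltnW lin)).
have [a ha ra] := flag_ex (r:=i.+1) fP (ltnW lin).
have [y' hy' ry'] := flag_ex (r:=i.+2) fP lin.
have [b1 hb1 rb1] := flag_ex (r:=i.+1) f1 (ltnW lin).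
have [b2 hb2 rb2] := flag_ex (r:=i.+1) f2 (ltnW lin).
have nyi : rk y != i.+1 by rewrite ry; apply/eqP/n_Sn.
have ny'i : rk y' != i.+1 by rewrite ry'; apply/eqP => /esym/n_Sn.
have cS := betw_card fP hy hy' ry ry'.
have aS := in_betw fP hy ha hy' ry ra ry'.
have y1 : y \in P1 by rewrite a1.
have y1' : y' \in P1 by rewrite a1.
have y2 : y \in P2 by rewrite a2.
have y2' : y' \in P2 by rewrite a2.
have b1S := in_betw f1 y1 hb1 y1' ry rb1 ry'.
have b2S := in_betw f2 y2 hb2 y2' ry rb2 ry'.
have nab (P : {set F}) b : is_flag D le P -> P != Psi -> agree i.+1 P Psi ->
    b \in P -> rk b = i.+1 -> a != b.
  move=> fQ nQ aQ hb rb; apply/eqP => e; subst b.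
  by move: nQ; rewrite (flag_ext fQ fP aQ hb ha rb) eqxx.
have e := two_of_three cS aS b1S b2S (nab _ _ f1 n1 a1 hb1 rb1) (nab _ _ f2 n2 a2 hb2 rb2).
subst b2; apply: (flag_ext f1 f2 _ hb1 hb2 rb1) => x nx.
by rewrite a1 // a2.
Qed.


Lemma foldl_flag (p : {perm 'I_n}) (l : seq 'I_n) Psi : is_flag D le Psi ->
  is_flag D le (foldl (fun Phi k => exch D le rk (val (p k)) Phi) Psi l).
Proof.
elim: l Psi => [//|k l IH] Psi fP /=; apply: IH.
by have [] := exch_spec (ltn_ord (p k)) fP.
Qed.

Lemma petrie_flag (p : {perm 'I_n}) Psi : is_flag D le Psi ->
  is_flag D le (petrie D le rk p Psi).
Proof. exact: foldl_flag. Qed.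

Lemma iter_flag (p : {perm 'I_n}) m Psi : is_flag D le Psi ->
  is_flag D le (iter m (petrie D le rk p) Psi).
Proof. by move=> fP; elim: m => //= m IH; apply: petrie_flag. Qed.

Definition below (Psi : {set F}) x := [set z in Psi | le z x && (z != x)].

Lemma below_rk Psi x : is_flag D le Psi -> x \in Psi ->
  below Psi x = [set z in Psi | rk z < rk x].
Proof.
move=> fP hx; apply/setP => z; rewrite !inE; case hz: (z \in Psi) => //=.
have Dz := flagD fP hz; have Dx := flagD fP hx.
apply/idP/idP => [/andP[l nz]|lt].
  exact: P_lt.
have nz : z != x by apply/eqP => e; move: lt; rewrite e ltnn.
rewrite nz andbT; apply: (cmp_le Dz Dx (flag_cmp fP hz hx)); exact: ltnW.
Qed.

Lemma card_lt m k : k <= m -> #|[set j : 'I_m | j < k]| = k.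
Proof.
move=> km.
have -> : [set j : 'I_m | j < k] = [set widen_ord km j | j : 'I_k].
  apply/setP => j; rewrite inE; apply/idP/imsetP => [lt|[j' _ ->]] /=.
    by exists (Ordinal lt) => //; apply: val_inj.
  exact: ltn_ord.
rewrite card_imset ?card_ord //; move=> a b /(congr1 val) /= e; exact: val_inj.
Qed.

Lemma below_card Psi x : is_flag D le Psi -> x \in Psi -> #|below Psi x| = rk x.
Proof.
move=> fP hx; rewrite below_rk //.
have Dx := flagD fP hx; have bx := P_bnd Dx.
pose g z : 'I_n.+2 := inord (rk z).
rewrite -(card_in_imset (f:=g)).
  rewrite (_ : g @: _ = [set j : 'I_n.+2 | j < rk x]) ?card_lt ?(leqW bx) //.
  apply/setP => j; rewrite inE; apply/imsetP/idP => [[z] | lt].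
    rewrite inE => /andP[hz lt] ->; rewrite /g inordK //.
    exact: (P_bnd (flagD fP hz)).
  have jb : j <= n.+1 by rewrite -ltnS.
  have [z hz rz] := flag_ex fP jb.
  exists z; first by rewrite inE hz rz.
  by apply: val_inj; rewrite /= inordK rz // ltnS -rz (P_bnd (flagD fP hz)).
move=> a b; rewrite !inE => /andP[ha _] /andP[hb _] /(congr1 (@nat_of_ord _)).
rewrite /g !inordK; [exact: flag_uniq fP ha hb| |].
  by rewrite ltnS; apply: P_bnd; apply: (flagD fP).
by rewrite ltnS; apply: P_bnd; apply: (flagD fP).
Qed.

Section Aut.
Variable f : F -> F.
Hypothesis Hf : is_aut D le f.

Lemma aut_injD : {in D &, injective f}.
Proof. by case: Hf. Qed.
Lemma aut_D x : D x -> D (f x).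
Proof. by case: Hf => _ H _ _; apply: H. Qed.
Lemma aut_sur y : D y -> exists2 x, D x & f x = y.
Proof. by case: Hf => _ _ H _; apply: H. Qed.
Lemma aut_le x y : D x -> D y -> le (f x) (f y) = le x y.
Proof. by case: Hf => _ _ _ H; apply: H. Qed.

Lemma aut_flag Psi : is_flag D le Psi -> is_flag D le (f @: Psi).
Proof.
move=> fP; apply/and3P; split.
- apply/forall_inP => y /imsetP[x hx ->]; exact: aut_D (flagD fP hx).
- apply/forall_inP => y /imsetP[x hx ->]; apply/forall_inP => z /imsetP[w hw ->].
  have Dx := flagD fP hx; have Dw := flagD fP hw.
  by rewrite !aut_le //; apply: (flag_cmp fP).
- apply/forallP => y; apply/implyP => /andP[Dy /forall_inP Hc].
  have [x Dx e] := aut_sur Dy; subst y; apply: imset_f.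
  apply: (flag_max fP Dx) => z hz.
  have Dz := flagD fP hz.
  by have := Hc (f z) (imset_f f hz); rewrite !aut_le.
Qed.

Lemma aut_rank Psi x : is_flag D le Psi -> x \in Psi -> rk (f x) = rk x.
Proof.
move=> fP hx.
have Dx := flagD fP hx.
rewrite -(below_card (aut_flag fP) (imset_f f hx)) -(below_card fP hx).
have -> : below (f @: Psi) (f x) = f @: below Psi x.
  apply/setP => y; apply/idP/imsetP.
    rewrite inE => /andP[/imsetP[z hz ->] /andP[l nz]].
    have Dz := flagD fP hz.
    exists z => //; rewrite inE hz -(aut_le Dz Dx) l /=.
    by apply: contra nz => /eqP ->.
  case=> z; rewrite inE => /andP[hz /andP[l nz]] ->.
  have Dz := flagD fP hz.
  rewrite inE imset_f // aut_le // l /=.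
  by apply: contra nz => /eqP /(aut_injD Dz Dx) ->.
apply: card_in_imset => a b; rewrite !inE => /andP[ha _] /andP[hb _].
exact: aut_injD (flagD fP ha) (flagD fP hb).
Qed.

Lemma imset_injD (P1 P2 : {set F}) : is_flag D le P1 -> is_flag D le P2 ->
  f @: P1 = f @: P2 -> P1 = P2.
Proof.
move=> f1 f2 e.
have H (Q1 Q2 : {set F}) : is_flag D le Q1 -> is_flag D le Q2 ->
    f @: Q1 = f @: Q2 -> forall z, z \in Q1 -> z \in Q2.
  move=> g1 g2 e' z hz; have : f z \in f @: Q2 by rewrite -e' imset_f.
  case/imsetP => w hw efw.
  by rewrite (aut_injD (flagD g1 hz) (flagD g2 hw) efw).
apply/setP => z; apply/idP/idP; first exact: H f1 f2 e z.
exact: H f2 f1 (esym e) z.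
Qed.

Lemma aut_exch i Psi : i < n -> is_flag D le Psi ->
  f @: exch D le rk i Psi = exch D le rk i (f @: Psi).
Proof.
move=> lin fP.
have [fE nE aE] := exch_spec lin fP.
have [fE' nE' aE'] := exch_spec lin (aut_flag fP).
apply: (exch_uniq lin (aut_flag fP) (aut_flag fE) fE' _ nE' _ aE').
  by apply: contra nE => /eqP e; apply/eqP; apply: imset_injD.
move=> y ny; apply/imsetP/imsetP => [[z hz e]|[z hz e]]; exists z => //.
  by rewrite -aE // -(aut_rank fE hz) -e.
by rewrite aE // -(aut_rank fP hz) -e.
Qed.

Lemma aut_petrie (p : {perm 'I_n}) Psi : is_flag D le Psi ->
  f @: petrie D le rk p Psi = petrie D le rk p (f @: Psi).
Proof.
rewrite /petrie; elim: (enum 'I_n) Psi => [//|k l IH] Psi fP /=.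
rewrite -aut_exch ?ltn_ord //; apply: IH.
by have [] := exch_spec (ltn_ord (p k)) fP.
Qed.

Lemma aut_iter (p : {perm 'I_n}) m Psi : is_flag D le Psi ->
  f @: iter m (petrie D le rk p) Psi = iter m (petrie D le rk p) (f @: Psi).
Proof.
move=> fP; elim: m => //= m IH.
by rewrite aut_petrie ?IH //; apply: iter_flag.
Qed.

End Aut.

End Poly.

Local Open Scope group_scope.

Section Model.
Local Open Scope group_scope.
Variables (gT : finGroupType) (n : nat) (W N : {group gT}) (s : 'I_n -> gT)
  (act : {set qface gT n} -> gT -> {set qface gT n}).
Hypothesis HC : string_C_group W s.
Hypothesis HP : is_polytope (qD W N s) (qle W N s) (@qrk gT n) n.
Hypothesis HA : flag_action W N s act.
Hypothesis HN : N :=: [set w in W | act (base_flag W N s) w == base_flag W N s].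

Local Notation D := (qD W N s).
Local Notation le := (qle W N s).
Local Notation rk := (@qrk gT n).
Local Notation Phi := (base_flag W N s).
Local Notation isf := (is_flag D le).
Local Notation fs := (faceset W N s).

Lemma WE : W :=: <<[set s i | i : 'I_n]>>.
Proof. by case: HC. Qed.

Lemma sW i : s i \in W.
Proof. by rewrite WE; apply: mem_gen; apply/imsetP; exists i. Qed.

Lemma HgenW i : Hgen s i \subset W.
Proof.
rewrite /Hgen gen_subG; apply/subsetP => x /imsetP[k _ ->]; exact: sW.
Qed.

Lemma act_flag Psi w : isf Psi -> w \in W -> isf (act Psi w).
Proof. by case: HA => H _ _ _; apply: H. Qed.
Lemma act1 Psi : isf Psi -> act Psi 1 = Psi.
Proof. by case: HA => _ H _ _; apply: H. Qed.
Lemma actM Psi v w : isf Psi -> v \in W -> w \in W -> act Psi (v * w) = act (act Psi v) w.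
Proof. by case: HA => _ _ H _; apply: H. Qed.
Lemma act_s Psi (i : 'I_n) : isf Psi -> act Psi (s i) = exch D le rk i Psi.
Proof. by case: HA => _ _ _ H; apply: H. Qed.

Lemma gen_ind (A : {set gT}) (Q : gT -> Prop) : Q 1 ->
  (forall v a, v \in <<A>> -> Q v -> a \in A -> Q (v * a)) ->
  forall w, w \in <<A>> -> Q w.
Proof.
move=> Q1 QS w /gen_prodgP [m [c cA ->]].
elim: m c cA => [|m IH] c cA; first by rewrite big_ord0.
rewrite big_ord_recr /=; apply: QS; last exact: cA.
  by apply: group_prod => i _; apply: mem_gen.
by apply: IH => i.
Qed.

Lemma Hr_grp r : exists K : {group gT}, Hr W s r = K.
Proof.
rewrite /Hr; case: ifP => _; last by exists W.
by exists (<<[set s k | k : 'I_n & val k != r.-1]>>)%G.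
Qed.

Lemma faceset_mul r v g : g \in Hr W s r -> fs r (v * g) = fs r v.
Proof.
rewrite /faceset; have [K ->] := Hr_grp r => gK.
apply/setP => z; apply/mulsgP/mulsgP => [[a k ha hk ->]|[a k ha hk ->]].
  exists (a * g^-1) (g * k); last by rewrite mulgA mulgKV.
    by move: ha; rewrite !mem_rcoset invMg mulgA.
  by rewrite groupM.
exists (a * g) (g^-1 * k); last by rewrite mulgA mulgK.
  by move: ha; rewrite !mem_rcoset invMg mulgA mulgK.
by rewrite groupM ?groupV.
Qed.

Lemma mem_faceset r w : w \in fs r w.
Proof.
rewrite /faceset; have [K ->] := Hr_grp r.
by apply/mulsgP; exists w 1; rewrite ?rcoset_refl ?group1 ?mulg1.
Qed.

Lemma sHr (i : 'I_n) (r : 'I_n.+2) : val r != (val i).+1 -> s i \in Hr W s r.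
Proof.
move=> ne; rewrite /Hr; case: ifP => [/andP[r0 rn] | _]; last exact: sW.
apply: mem_gen; apply/imsetP; exists i => //; rewrite inE.
by apply: contra ne => /eqP ->; rewrite prednK.
Qed.

Lemma HrI (i : 'I_n) (r : 'I_n.+2) : val r = (val i).+1 -> Hr W s r = Hgen s i.
Proof. by move=> e; rewrite /Hr e ltn0Sn (ltn_ord i). Qed.

Lemma base_flagP : isf Phi.
Proof.
apply/and3P; split.
- apply/forall_inP => x; rewrite inE => hx.
  by apply/exists_inP; exists 1; rewrite ?group1.
- apply/forall_inP => x; rewrite inE => hx; apply/forall_inP => y; rewrite inE => hy.
  rewrite /qle; case: (leqP x.1 y.1) => h; apply/orP; [left|right];
    (apply/andP; split; [by rewrite ?h ?(ltnW h)|]);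
    by apply/exists_inP; exists 1; rewrite ?group1 // hx hy.
- apply/forallP => x; apply/implyP => /andP[Dx /forall_inP Hc].
  pose g : qface gT n := (x.1, fs x.1 1).
  have hg : g \in Phi by rewrite inE.
  rewrite inE; have := Hc g hg; rewrite /qle /=.
  by case/orP => /andP[_ /exists_inP[w _ /andP[/eqP -> /eqP ->]]].
Qed.

Lemma actN n0 : n0 \in N -> act Phi n0 = Phi.
Proof. by rewrite HN inE => /andP[_ /eqP]. Qed.

Lemma NW : N \subset W.
Proof. by rewrite HN; apply/subsetP => w; rewrite inE => /andP[]. Qed.

Lemma inv_H (i : 'I_n) h : h \in Hgen s i -> forall Psi, isf Psi ->
  forall x, rk x = (val i).+1 -> (x \in act Psi h) = (x \in Psi).
Proof.
move: h; apply: gen_ind => [Psi fP x _|v a hv IH /imsetP[k]]; first by rewrite act1.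
rewrite inE => nk -> Psi fP x rx.
have vW : v \in W by apply: (subsetP (HgenW i)).
rewrite actM ?sW // act_s ?act_flag //.
have [_ _ ag] := exch_spec HP (ltn_ord k) (act_flag fP vW).
rewrite ag ?IH // rx; apply: contra nk => /eqP [] ->; exact: eqxx.
Qed.

Definition Qf w := forall x, x \in act Phi w -> x.2 = fs x.1 w.

Lemma step v (k : 'I_n) : v \in W -> Qf v -> Qf (v * s k).
Proof.
move=> vW IH x hx.
have fPsi := act_flag base_flagP vW.
move: hx; rewrite actM ?sW ?base_flagP // act_s // => hx.
have [fE nE aE] := exch_spec HP (ltn_ord k) fPsi.
case: (eqVneq (rk x) (val k).+1) => [rx|nrx]; last first.
  have hx0 : x \in act Phi v by rewrite -aE.
  by rewrite (IH x hx0) faceset_mul // sHr.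
have xnP : x \notin act Phi v.
  apply/negP => hxP; move: nE.
  by rewrite (flag_ext HP fE fPsi aE hx hxP rx) eqxx.
have lin := ltn_ord k.
have [y hy ry] := flag_ex HP (r:=val k) fPsi (leqW (ltnW lin)).
have [a ha ra] := flag_ex HP (r:=(val k).+1) fPsi (ltnW lin).
have [y' hy' ry'] := flag_ex HP (r:=(val k).+2) fPsi lin.
have nyk : rk y != (val k).+1 by rewrite ry; apply/eqP/n_Sn.
have ny'k : rk y' != (val k).+1 by rewrite ry'; apply/eqP => /esym/n_Sn.
have hyE : y \in exch D le rk k (act Phi v) by rewrite aE.
have hy'E : y' \in exch D le rk k (act Phi v) by rewrite aE.
have cS := betw_card HP fPsi hy hy' ry ry'.
have aS := in_betw HP fPsi hy ha hy' ry ra ry'.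
have xS := in_betw HP fE hyE hx hy'E ry rx ry'.
have nax : a != x by apply: contraNneq xnP => <-.
pose b : qface gT n := (x.1, fs x.1 (v * s k)).
have ea1 : a.1 = x.1 by apply: val_inj; rewrite /= -[val a.1]/(rk a) -[val x.1]/(rk x) ra rx.
case: (eqVneq b a) => [eba | nba].
  exfalso; move: xnP; apply/negP/negPn.
  have e2 : fs x.1 (v * s k) = fs x.1 v by rewrite -[LHS]/(b.2) eba (IH a ha) ea1.
  have := mem_faceset x.1 (v * s k); rewrite e2 /faceset.
  rewrite (HrI (i:=k)) //.
  case/mulsgP => a0 h /rcosetP[n0 hn0 ->] hh e.
  have hW : h \in W by apply: (subsetP (HgenW k)).
  have n0W : n0 \in W by apply: (subsetP NW).
  rewrite -(inv_H hh fPsi rx).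
  have -> : act (act Phi v) h = act Phi (v * s k).
    rewrite e -mulgA (actM base_flagP n0W (groupM vW hW)) (actN hn0).
    by rewrite (actM base_flagP vW hW).
  by rewrite actM ?sW ?base_flagP // act_s.
have bS : b \in betw D le y y'.
  have vsW : v * s k \in W by rewrite groupM ?sW.
  rewrite inE; apply/and5P; split.
  - by apply/exists_inP; exists (v * s k).
  - rewrite /qle; apply/andP; split.
      by rewrite -[val y.1]/(rk y) -[val b.1]/(rk x) ry rx.
    apply/exists_inP; exists (v * s k) => //; apply/andP; split => //.
    by rewrite (IH y hy) faceset_mul // sHr.
  - rewrite /qle; apply/andP; split.
      by rewrite -[val y'.1]/(rk y') -[val b.1]/(rk x) ry' rx.
    apply/exists_inP; exists (v * s k) => //; apply/andP; split => //.
    by rewrite (IH y' hy') faceset_mul // sHr.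
  - apply/eqP => e; have : rk b = rk y by rewrite e.
    by rewrite ry /qrk /= -[val x.1]/(rk x) rx => /esym/n_Sn.
  - apply/eqP => e; have : rk b = rk y' by rewrite e.
    by rewrite ry' /qrk /= -[val x.1]/(rk x) rx => /n_Sn.
have nab : a != b by rewrite eq_sym.
by rewrite -(two_of_three cS aS bS xS nab nax).
Qed.

Lemma formula w : w \in W -> Qf w.
Proof.
rewrite WE; move: w; apply: gen_ind.
  by move=> x; rewrite act1 ?base_flagP // inE => /eqP.
move=> v a hv IH /imsetP[k _ ->]; apply: step => //.
by rewrite WE.
Qed.


Lemma coxW (p : {perm 'I_n}) : \prod_(k < n) s (p k) \in W.
Proof. by apply: group_prod => i _; apply: sW. Qed.

Lemma foldl_act (p : {perm 'I_n}) (l : seq 'I_n) Psi : isf Psi ->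
  foldl (fun Phi k => exch D le rk (val (p k)) Phi) Psi l =
  act Psi (\prod_(k <- l) s (p k)).
Proof.
elim: l Psi => [|k l IH] Psi fP /=; first by rewrite big_nil act1.
have fE : isf (exch D le rk (p k) Psi) by have [] := exch_spec HP (ltn_ord (p k)) fP.
rewrite IH // big_cons -act_s // -actM ?sW //.
by apply: group_prod => i _; apply: sW.
Qed.

Lemma petrie_act (p : {perm 'I_n}) Psi : isf Psi ->
  petrie D le rk p Psi = act Psi (\prod_(k < n) s (p k)).
Proof. by move=> fP; rewrite /petrie foldl_act // enumT /index_enum unlock. Qed.

Lemma iter_act (p : {perm 'I_n}) m Psi : isf Psi ->
  iter m (petrie D le rk p) Psi = act Psi ((\prod_(k < n) s (p k)) ^+ m).
Proof.
move=> fP; elim: m => [|m IH] /=; first by rewrite expg0 act1.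
have cW := coxW p.
by rewrite IH petrie_act ?act_flag ?groupX // -actM ?groupX // expgSr.
Qed.

Lemma shift Psi c a b : isf Psi -> c \in W -> a <= b ->
  act Psi (c ^+ a) = act Psi (c ^+ b) -> act Psi (c ^+ (b - a)) = Psi.
Proof.
move=> fP cW ab e.
have -> : c ^+ (b - a) = c ^+ b * (c ^+ a)^-1 by rewrite -{2}(subnK ab) expgD mulgK.
rewrite actM ?groupV ?groupX // -e -actM ?groupV ?groupX // mulgV act1 //.
Qed.

Lemma main0 (r : nat) (u : 'I_r.+1 -> gT) :
  (forall j, u j \in W) ->
  (forall Psi, isf Psi -> exists j, same_aut_orbit D le (act Phi (u j)) Psi) ->
  (forall (i : 'I_n) (j : 'I_r.+1) (c : gT), coxeter s c -> forall k : nat,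
       (0 < k < #|[set act (act Phi (u j)) a | a in <[c]>]|)%N ->
       (c ^+ k) *: Hgen s i :&: N :^ u j = set0) ->
  forall Psi, isf Psi -> forall p : {perm 'I_n}, forall d, 0 < d ->
  (forall m, 0 < m <= d -> iter m (petrie D le rk p) Psi != Psi) ->
  forall x, D x -> 0 < rk x <= n -> x \in Psi ->
  x \in iter d (petrie D le rk p) Psi -> False.
Proof.
move=> uW Horb Hcond Psi fP p d d0 Hper x Dx /andP[rx0 rxn] hx hxd.
set c := \prod_(k < n) s (p k).
have cW : c \in W := coxW p.
have [j [f fa ef]] := Horb Psi fP.
set Psi0 := act Phi (u j).
have f0 : isf Psi0 := act_flag base_flagP (uW j).
have iterE m : iter m (petrie D le rk p) Psi = f @: act Psi0 (c ^+ m).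
  by rewrite -ef -(aut_iter HP fa p m f0) iter_act.
have hx0 : x \in f @: act Psi0 (c ^+ 0) by rewrite -iterE.
rewrite iterE in hxd.
case/imsetP: hx0 => a ha ea; case/imsetP: hxd => b hb eb.
rewrite expg0 act1 // in ha.
have fd : isf (act Psi0 (c ^+ d)) := act_flag f0 (groupX d cW).
have eab : a = b.
  apply: (aut_injD fa); [exact: flagD f0 ha|exact: flagD fd hb|].
  by rewrite -ea -eb.
subst b.
have rka : rk a = rk x by rewrite ea (aut_rank HP fa f0 ha).
rewrite -actM ?base_flagP ?uW ?groupX // in hb.
have e1 := formula (uW j) ha.
have e2 := formula (groupM (uW j) (groupX d cW)) hb.
have iln : (rk x).-1 < n by rewrite -ltnS prednK.
pose i : 'I_n := Ordinal iln.
have eHr : Hr W s a.1 = Hgen s i.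
  by apply: HrI; rewrite /= prednK // -rka.
have := mem_faceset a.1 (u j * c ^+ d); rewrite -e2 e1 /faceset eHr.
case/mulsgP => a0 h /rcosetP[n0 hn0 ->] hh e.
have z1 : c ^+ d * h^-1 \in c ^+ d *: Hgen s i by rewrite mem_lcoset mulKg groupV.
have z2 : c ^+ d * h^-1 \in N :^ u j.
  have -> : c ^+ d * h^-1 = n0 ^ u j.
    by rewrite /conjg -[c ^+ d](mulKg (u j)) e !mulgA mulgK.
  by rewrite memJ_conjg.
have Hcox : coxeter s c by exists p.
have dlt : d < #|[set act Psi0 a | a in <[c]>]|.
  pose g (m : 'I_d.+1) := act Psi0 (c ^+ m).
  have gne (m1 m2 : 'I_d.+1) : m1 < m2 -> g m1 = g m2 -> False.
    move=> lt e'; have e3 := shift f0 cW (ltnW lt) e'.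
    have hm : 0 < m2 - m1 <= d.
      rewrite subn_gt0 lt /=; apply: leq_trans (leq_subr _ _) _.
      by rewrite -ltnS.
    by move: (Hper _ hm); rewrite iterE e3 ef eqxx.
  have ginj : injective g.
    move=> m1 m2 e'; apply: val_inj; case: (ltngtP m1 m2) => // lt; exfalso.
      exact: gne lt e'.
    exact: gne lt (esym e').
  apply: (@leq_trans #|[set g m | m : 'I_d.+1]|).
    by rewrite card_imset // card_ord.
  apply: subset_leq_card; apply/subsetP => _ /imsetP[m _ ->].
  by apply: imset_f; exact: mem_cycle.
have := Hcond i j c Hcox d; rewrite d0 dlt => /(_ isT) e0.
have : c ^+ d * h^-1 \in set0 by rewrite -e0 inE z1 z2.
by rewrite inE.
Qed.

End Model.

Unset Implicit Arguments.
Set Strict Implicit.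

Theorem theorem7 (gT : finGroupType) (n : nat) (W N : {group gT})
    (s : 'I_n -> gT)
    (act : {set qface gT n} -> gT -> {set qface gT n})
    (r : nat) (u : 'I_r.+1 -> gT) :
  string_C_group W s ->
  (* P(W)/N is a polytope *)
  is_polytope (qD W N s) (qle W N s) (@qrk gT n) n ->
  (* ... admitting the flag action of W ... *)
  flag_action W N s act ->
  (* ... with N the stabilizer of the base flag *)
  N :=: [set w in W | act (base_flag W N s) w == base_flag W N s] ->
  (* u_1 = 1, u_j in W, and Phi^{u_j} represent the flag orbits of Aut *)
  u ord0 = 1 ->
  (forall j, u j \in W) ->
  (forall Psi, is_flag (qD W N s) (qle W N s) Psi ->
     exists j, same_aut_orbit (qD W N s) (qle W N s)
                 (act (base_flag W N s) (u j)) Psi) ->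
  (forall j j', same_aut_orbit (qD W N s) (qle W N s)
                 (act (base_flag W N s) (u j))
                 (act (base_flag W N s) (u j')) -> j = j') ->
  (* the coset condition, with m_{j,l} the orbit size *)
  (forall (i : 'I_n) (j : 'I_r.+1) (c : gT), coxeter s c ->
     forall k : nat,
       (0 < k < #|[set act (act (base_flag W N s) (u j)) a | a in <[c]>]|)%N ->
       (c ^+ k) *: Hgen s i :&: N :^ u j = set0) ->
  acoptic (qD W N s) (qle W N s) (@qrk gT n) n.
Proof.
move=> HC HP HA HN _ uW Horb _ Hcond.
move=> Psi fPsi p k k' lt Hper x Dx rx hxk hxk'.
have f1 := iter_flag HP p k fPsi.
have cW := coxW HC p.
apply: (main0 HC HP HA HN uW Horb Hcond f1 (p:=p) (d:=k' - k) _ _ Dx rx hxk).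
- by rewrite subn_gt0.
- move=> m /andP[m0 md]; apply/negP => /eqP e.
  move: e; rewrite -iterD !(iter_act HC HP HA) // => e.
  have := shift HA fPsi cW (leq_addl m k) (esym e); rewrite addnK => e'.
  have hm : 0 < m <= k'.
    by rewrite m0 /=; apply: leq_trans md (leq_subr _ _).
  by move: (Hper m hm); rewrite (iter_act HC HP HA) // e' eqxx.
- by rewrite -iterD subnK // ltnW.
Qed.
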